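(* Let $M\ge1$, let $\Delta_M=\{\mathbf d\in[0,1]^M:\sum_i d_i=1\}$, and for each $j\ge0$ let $C_{vj}:\Delta_M\to[0,1]$ be Lipschitz continuous functions with $C_{vj}(\mathbf d)\ge C_{v(j+1)}(\mathbf d)$ for all $j,\mathbf d$. For $\epsilon_v>0$ let $J_{\epsilon_v}(\mathbf d)$ be the smallest integer $j$ with $C_{vj}(\mathbf d)>C_{v(j+1)}(\mathbf d)+\epsilon_v$. For $p\in[0,1]$, $\mathbf d\in\Delta_M$ and integer $n\ge0$ let $q_v(p\mathbf d,n)=\sum_{j=0}^{n}\binom{n}{j}p^j(1-p)^{n-j}C_{vj}(\mathbf d)$, extended to real $\hat K\ge0$ by $q_v(p\mathbf d,\hat K)=(\lfloor\hat K\rfloor+1-\hat K)q_v(p\mathbf d,\lfloor\hat K\rfloor)+(\hat K-\lfloor\hat K\rfloor)q_v(p\mathbf d,\lfloor\hat K\rfloor+1)$. Let $\hat K_0<\hat K_1<\dots<\hat K_L$ be integers, and suppose values $p(\hat K_i)\in(0,1)$ and $\mathbf d(\hat K_i)\in\Delta_M$ are given; set $\mathbf p(\hat K_i)=p(\hat K_i)\mathbf d(\hat K_i)$ and $q_v^*(\hat K_i)=q_v(\mathbf p(\hat K_i),\hat K_i)$. For $i=1,\dots,L$ and $0\le\lambda<1$ define $\hat K_{i\lambda}=(1-\lambda)\hat K_{i-1}+\lambda\hat K_i$, $\mathbf d_{i\lambda}=(1-\lambda)\mathbf d(\hat K_{i-1})+\lambda\mathbf d(\hat K_i)$, $q^*_{vi\lambda}=(1-\lambda)q_v^*(\hat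 K_{i-1})+\lambda q_v^*(\hat K_i)$. Assume (Pinpoints Condition): (1) there is $\epsilon_q>0$ with $q_v^*(\hat K_{i-1})-q_v^*(\hat K_i)\ge\epsilon_q$ for $i=1,\dots,L$; (2) there is $\epsilon_v>0$ with $\hat K_{i\lambda}>J_{\epsilon_v}(\mathbf d_{i\lambda})$ for all $i=1,\dots,L$ and $0\le\lambda<1$; (3) there are $0<\underline p<\overline p<1$ with $\underline p\le p(\hat K_i)\le\overline p$ for $i=1,\dots,L$; (4) $q_v(\overline p\,\mathbf d_{i\lambda},\hat K_{i\lambda})\le q^*_{vi\lambda}\le q_v(\underline p\,\mathbf d_{i\lambda},\hat K_{i\lambda})$ for all $i=1,\dots,L$ and $0\le\lambda<1$. Complete the function by the Interpolation Approach: for $\hat K=\hat K_{i\lambda}$ ($i=1,\dots,L$, $0\le\lambda<1$), choose $p(\hat K)\in[\underline p,\overline p]$ with $q_v(p(\hat K)\mathbf d_{i\lambda},\hat K_{i\lambda})=q^*_{vi\lambda}$, and set $\mathbf d(\hat K)=\mathbf d_{i\lambda}$, $\mathbf p(\hat K)=p(\hat K)\mathbf d_{i\lambda}$, and $q_v^*(\hat K)=(\lfloor\hat K\rfloor+1-\hat K)q_v(\mathbf p(\hat K),\lfloor\hat K\rfloor)+(\hat K-\lfloor\hat K\rfloor)q_v(\mathbf p(\hat K),\lfloor\hat K\rfloor+1)$. Then on $[\hat K_0,\hat K_L]$ the following (Monotonicity and Gradient Condition) hold: (a) $\mathbf p(\hat K)$ is Lipschitz continuous: there is $K_g>0$ with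 $\|\mathbf p(\hat K_a)-\mathbf p(\hat K_b)\|\le K_g|\hat K_a-\hat K_b|$ for all $\hat K_a,\hat K_b\in[\hat K_0,\hat K_L]$; (b) $q_v^*(\hat K)$ is continuous and strictly decreasing, and there is $\epsilon'>0$ with $|q_v^*(\hat K_a)-q_v^*(\hat K_b)|\ge\epsilon'|\hat K_a-\hat K_b|$ for all $\hat K_a,\hat K_b\in[\hat K_0,\hat K_L]$; (c) $\hat K>J_{\epsilon_v}(\mathbf d(\hat K))$ for all $\hat K\in[\hat K_0,\hat K_L)$; (d) $\underline p\le p(\hat K)\le\overline p$ for all $\hat K\in[\hat K_0,\hat K_L]$.
   Context: Setting: each of several homogeneous users has $M$ transmission options plus idling; a user's transmission probability vector is $\mathbf p=p\mathbf d$, where $p$ is the probability of transmitting and $\mathbf d\in\Delta_M$ gives the conditional probabilities of the options. $C_{vj}(\mathbf d)$ is the success probability of a virtual packet transmitted in parallel with $j$ real packets when all users use direction $\mathbf d$, and $q_v(p\mathbf d,n)$ is the virtual packet success probability when $n$ users each use $p\mathbf d$. The Lipschitz continuity of each $C_{vj}(\cdot)$ in $\mathbf d$ is a standing regularity assumption used implicitly. $\hat K$ plays the role of a user-number estimate and $q_v^*$ is the ''theoretical channel contention measure''; the integers $\hat K_i$ are called pinpoints. *)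

(* Defs.v *)
From Stdlib Require Import Reals Lra Lia List.
Open Scope R_scope.

Definition sumR (n : nat) (f : nat -> R) : R :=
  fold_right Rplus 0 (map f (seq 0 n)).

(* Vectors of R^M are represented by functions nat -> R, of which only the
   coordinates m < M are meaningful. *)
Definition in_simplex (M : nat) (d : nat -> R) : Prop :=
  (forall m, (m < M)%nat -> 0 <= d m <= 1) /\ sumR M d = 1.

Definition distM (M : nat) (x y : nat -> R) : R :=
  sqrt (sumR M (fun m => (x m - y m) ^ 2)).

Definition vscale (a : R) (d : nat -> R) : nat -> R := fun m => a * d m.
Definition vcomb (lam : R) (x y : nat -> R) : nat -> R :=
  fun m => (1 - lam) * x m + lam * y m.

(* Floor of a real number, as a natural number (used for K >= 0). *)
Definition nfloor (x : R) : nat := Z.to_nat (Int_part x).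

Definition qv (Cv : nat -> (nat -> R) -> R) (p : R) (d : nat -> R) (n : nat) : R :=
  sum_f_R0 (fun j => C n j * p ^ j * (1 - p) ^ (n - j) * Cv j d) n.

Definition qvR (Cv : nat -> (nat -> R) -> R) (p : R) (d : nat -> R) (K : R) : R :=
  let n := nfloor K in
  (INR n + 1 - K) * qv Cv p d n + (K - INR n) * qv Cv p d (S n).

Definition isJ (Cv : nat -> (nat -> R) -> R) (eps : R) (d : nat -> R) (j : nat) : Prop :=
  Cv j d > Cv (S j) d + eps /\
  (forall k, (k < j)%nat -> ~ (Cv k d > Cv (S k) d + eps)).

Definition gtJ (Cv : nat -> (nat -> R) -> R) (eps : R) (d : nat -> R) (K : R) : Prop :=
  exists j, isJ Cv eps d j /\ INR j < K.

Definition Kil (Kp : nat -> nat) (i : nat) (lam : R) : R :=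
  (1 - lam) * INR (Kp (i - 1)%nat) + lam * INR (Kp i).

(* Main.v *)
Require Import Defs.
From Stdlib Require Import Reals List.
From Stdlib Require Import Lra Lia ZArith Classical ClassicalEpsilon.
Open Scope R_scope.

Lemma Rabs_le_between a b : Rabs a <= b -> -b <= a <= b.
Proof. intros; split_Rabs; lra. Qed.

Definition Bern (n : nat) (f : nat -> R) (p : R) : R :=
  sum_f_R0 (fun j => C n j * p ^ j * (1 - p) ^ (n - j) * f j) n.

Lemma C_n0 n : C n 0 = 1.
Proof. unfold C. rewrite Nat.sub_0_r. simpl. field. apply INR_fact_neq_0. Qed.
Lemma C_nn n : C n n = 1.
Proof. unfold C. rewrite Nat.sub_diag. simpl. field. apply INR_fact_neq_0. Qed.

Lemma Bern0 f p : Bern 0 f p = f 0%nat.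
Proof. unfold Bern. simpl. rewrite C_n0. ring. Qed.

Lemma Bern_rec n f p :
  Bern (S n) f p = (1 - p) * Bern n f p + p * Bern n (fun j => f (S j)) p.
Proof.
  destruct n as [|n].
  - unfold Bern. simpl. rewrite !C_n0, !C_nn. ring.
  - unfold Bern.
    rewrite (decomp_sum _ (S (S n))) by lia. simpl Init.Nat.pred.
    rewrite tech5.
    rewrite (decomp_sum (fun j => C (S n) j * p ^ j * (1 - p) ^ (S n - j) * f j) (S n)) by lia.
    simpl Init.Nat.pred.
    rewrite (tech5 (fun j => C (S n) j * p ^ j * (1 - p) ^ (S n - j) * f (S j))).
    rewrite !Rmult_plus_distr_l, !scal_sum.
    assert (E: sum_f_R0 (fun i => C (S (S n)) (S i) * p ^ S i * (1 - p) ^ (S (S n) - S i) * f (S i)) n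
      = sum_f_R0 (fun i => C (S n) (S i) * p ^ (S i) * (1 - p) ^ (S n - S i) * f (S i) * (1 - p)) n
       + sum_f_R0 (fun i => C (S n) i * p ^ i * (1 - p) ^ (S n - i) * f (S i) * p) n).
    { rewrite <- plus_sum. apply sum_eq. intros i Hi.
      rewrite <- pascal by lia.
      replace (S (S n) - S i)%nat with (S (S n - S i))%nat by lia.
      replace (S n - i)%nat with (S (S n - S i))%nat by lia.
      simpl. ring. }
    rewrite E. clear E.
    rewrite !C_n0, !C_nn. rewrite !Nat.sub_diag. simpl. ring.
Qed.

Lemma Bern_nonneg n : forall f p, (forall j, 0 <= f j) -> 0 <= p <= 1 -> 0 <= Bern n f p.
Proof.
  induction n; intros f p Hf Hp.
  - rewrite Bern0. auto.
  - rewrite Bern_rec.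
    pose proof (IHn f p Hf Hp). pose proof (IHn (fun j => f (S j)) p (fun j => Hf (S j)) Hp).
    nra.
Qed.

Lemma Bern_bounds n : forall f p a b, (forall j, a <= f j <= b) -> 0 <= p <= 1 ->
  a <= Bern n f p <= b.
Proof.
  induction n; intros f p a b Hf Hp.
  - rewrite Bern0. auto.
  - rewrite Bern_rec.
    pose proof (IHn f p a b Hf Hp). pose proof (IHn (fun j => f (S j)) p a b (fun j => Hf (S j)) Hp).
    nra.
Qed.

Lemma Bern_minus n : forall f g p,
  Bern n (fun j => f j - g j) p = Bern n f p - Bern n g p.
Proof.
  induction n; intros f g p.
  - rewrite !Bern0. ring.
  - rewrite !Bern_rec. rewrite IHn. rewrite (IHn (fun j => f (S j)) (fun j => g (S j))). ring.
Qed.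

Lemma Bern_close n : forall f g p c, (forall j, (j <= n)%nat -> Rabs (f j - g j) <= c) ->
  0 <= p <= 1 -> Rabs (Bern n f p - Bern n g p) <= c.
Proof.
  induction n; intros f g p c H Hp.
  - rewrite !Bern0. apply H. lia.
  - rewrite !Bern_rec.
    assert (H1 := IHn f g p c (fun j Hj => H j ltac:(lia)) Hp).
    assert (H2 := IHn (fun j => f (S j)) (fun j => g (S j)) p c (fun j Hj => H (S j) ltac:(lia)) Hp).
    apply Rabs_le. apply Rabs_le_between in H1. apply Rabs_le_between in H2. nra.
Qed.

Lemma Bern_mono n : forall f p p', (forall j, 0 <= f j <= 1) -> (forall j, f (S j) <= f j) ->
  0 <= p -> p <= p' -> p' <= 1 ->
  0 <= Bern n f p - Bern n f p' <= INR n * (p' - p).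
Proof.
  induction n; intros f p p' Hf Hm H1 H2 H3.
  - rewrite !Bern0. simpl. lra.
  - rewrite !Bern_rec.
    assert (X := IHn f p p' Hf Hm H1 H2 H3).
    assert (Y := IHn (fun j => f (S j)) p p' (fun j => Hf (S j)) (fun j => Hm (S j)) H1 H2 H3).
    assert (G := Bern_bounds n (fun j => f j - f (S j)) p' 0 1
                   ltac:(intro j; pose proof (Hf j); pose proof (Hf (S j)); pose proof (Hm j); lra) ltac:(lra)).
    rewrite Bern_minus in G. rewrite S_INR.
    pose proof (pos_INR n).
    set (a := Bern n f p) in *. set (b := Bern n f p') in *.
    set (c := Bern n (fun j => f (S j)) p) in *. set (d := Bern n (fun j => f (S j)) p') in *.
    assert (A1 : 0 <= (1 - p) * (a - b) <= (1 - p) * (INR n * (p' - p))) by (split; [apply Rmult_le_pos|apply Rmult_le_compat_l]; lra).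
    assert (A2 : 0 <= p * (c - d) <= p * (INR n * (p' - p))) by (split; [apply Rmult_le_pos|apply Rmult_le_compat_l]; lra).
    assert (A3 : 0 <= (p' - p) * (b - d) <= (p' - p) * 1) by (split; [apply Rmult_le_pos|apply Rmult_le_compat_l]; lra).
    split; nra.
Qed.

Lemma Bern_single n : forall g p m J, (forall j, 0 <= g j) -> 0 <= m -> m <= p -> m <= 1 - p ->
  (J <= n)%nat -> m ^ n * g J <= Bern n g p.
Proof.
  induction n; intros g p m J Hg Hm0 Hm1 Hm2 HJ.
  - rewrite Bern0. replace J with 0%nat by lia. simpl. lra.
  - rewrite Bern_rec. simpl pow.
    pose proof (Bern_nonneg n g p Hg ltac:(lra)).
    pose proof (Bern_nonneg n (fun j => g (S j)) p (fun j => Hg (S j)) ltac:(lra)).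
    pose proof (pow_le m n Hm0).
    destruct J as [|J].
    + pose proof (IHn g p m 0%nat Hg Hm0 Hm1 Hm2 ltac:(lia)).
      pose proof (Hg 0%nat). nra.
    + pose proof (IHn (fun j => g (S j)) p m J (fun j => Hg (S j)) Hm0 Hm1 Hm2 ltac:(lia)).
      simpl in *. pose proof (Hg (S J)). nra.
Qed.

Lemma Bern_strict n f p p' m J : (forall j, 0 <= f j <= 1) -> (forall j, f (S j) <= f j) ->
  0 <= p -> p <= p' -> p' <= 1 -> 0 <= m -> m <= p' -> m <= 1 - p' -> (J <= n)%nat ->
  (p' - p) * (m ^ n * (f J - f (S J))) <= Bern (S n) f p - Bern (S n) f p'.
Proof.
  intros Hf Hm H1 H2 H3 Hm0 Hm1 Hm2 HJ.
  rewrite !Bern_rec.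
  assert (X := Bern_mono n f p p' Hf Hm H1 H2 H3).
  assert (Y := Bern_mono n (fun j => f (S j)) p p' (fun j => Hf (S j)) (fun j => Hm (S j)) H1 H2 H3).
  assert (G := Bern_single n (fun j => f j - f (S j)) p' m J
                 ltac:(intro j; pose proof (Hf j); pose proof (Hf (S j)); pose proof (Hm j); lra) Hm0 Hm1 Hm2 HJ).
  rewrite Bern_minus in G.
  set (a := Bern n f p) in *. set (b := Bern n f p') in *.
  set (c := Bern n (fun j => f (S j)) p) in *. set (d := Bern n (fun j => f (S j)) p') in *.
  nra.
Qed.

Lemma nfloor_eq n K : INR n <= K < INR n + 1 -> nfloor K = n.
Proof.
  intros [H1 H2]. unfold nfloor, Int_part.
  assert (E: up K = (Z.of_nat n + 1)%Z).
  { symmetry. apply tech_up; rewrite plus_IZR, <- INR_IZR_INZ; simpl; lra. }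
  rewrite E. replace (Z.of_nat n + 1 - 1)%Z with (Z.of_nat n) by lia. apply Nat2Z.id.
Qed.

Lemma nfloor_spec K : 0 <= K -> INR (nfloor K) <= K < INR (nfloor K) + 1.
Proof.
  intros HK. destruct (base_Int_part K) as [H1 H2].
  assert (Hz : (0 <= Int_part K)%Z).
  { assert (IZR (Int_part K) > -1) by lra.
    apply lt_IZR in H. lia. }
  unfold nfloor. rewrite INR_IZR_INZ, Z2Nat.id by exact Hz. lra.
Qed.

Lemma nfloor_INR n : nfloor (INR n) = n.
Proof. apply nfloor_eq. lra. Qed.

Lemma sumR_S n f : sumR (S n) f = sumR n f + f n.
Proof.
  unfold sumR. rewrite seq_S, map_app, fold_right_app. simpl.
  generalize (map f (seq 0 n)). intro l. induction l; simpl; lra.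
Qed.

Lemma sumR_lin n a b f g : sumR n (fun m => a * f m + b * g m) = a * sumR n f + b * sumR n g.
Proof.
  induction n. - unfold sumR. simpl. ring. - rewrite !sumR_S, IHn. ring.
Qed.

Lemma sumR_le n f c : (forall m, (m < n)%nat -> f m <= c) -> sumR n f <= INR n * c.
Proof.
  induction n; intros H. - unfold sumR; simpl; lra.
  - rewrite sumR_S, S_INR. specialize (IHn (fun m Hm => H m ltac:(lia))). specialize (H n ltac:(lia)). lra.
Qed.

Lemma distM_nonneg M x y : 0 <= distM M x y.
Proof. apply sqrt_pos. Qed.

Lemma distM_bound M x y c : 0 <= c -> (forall m, (m < M)%nat -> Rabs (x m - y m) <= c) ->
  distM M x y <= sqrt (INR M) * c.
Proof.
  intros Hc H. unfold distM.
  rewrite <- (sqrt_pow2 c Hc). rewrite <- sqrt_mult_alt by apply pos_INR.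
  apply sqrt_le_1_alt. apply sumR_le. intros m Hm. specialize (H m Hm).
  assert (0 <= Rabs (x m - y m)) by apply Rabs_pos.
  rewrite <- (pow2_abs (x m - y m)). nra.
Qed.

Lemma chain (x : nat -> R) (f : R -> R) (lo hi : R) (L : nat) :
  (forall i, (i < L)%nat -> forall a b, x i <= a -> a <= b -> b <= x (S i) ->
     lo * (b - a) <= f b - f a <= hi * (b - a)) ->
  forall a b, x 0%nat <= a -> a <= b -> b <= x L ->
     lo * (b - a) <= f b - f a <= hi * (b - a).
Proof.
  induction L; intros H a b H1 H2 H3.
  - assert (a = b) by lra. subst. lra.
  - destruct (Rle_dec b (x L)).
    + apply (IHL (fun i Hi => H i ltac:(lia))); auto.
    + destruct (Rle_dec (x L) a).
      * apply (H L ltac:(lia)); lra.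
      * assert (A := IHL (fun i Hi => H i ltac:(lia)) a (x L) H1 ltac:(lra) ltac:(lra)).
        assert (B := H L ltac:(lia) (x L) b ltac:(lra) ltac:(lra) H3).
        lra.
Qed.

Lemma chain_abs x f Sc L :
  (forall i, (i < L)%nat -> forall a b, x i <= a -> a <= b -> b <= x (S i) ->
     Rabs (f b - f a) <= Sc * (b - a)) ->
  forall a b, x 0%nat <= a <= x L -> x 0%nat <= b <= x L -> Rabs (f a - f b) <= Sc * Rabs (a - b).
Proof.
  intros H.
  assert (K : forall a b, x 0%nat <= a -> a <= b -> b <= x L -> (-Sc) * (b - a) <= f b - f a <= Sc * (b - a)).
  { apply chain. intros i Hi a b H1 H2 H3. specialize (H i Hi a b H1 H2 H3).
    apply Rabs_le_between in H. lra. }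
  intros a b Ha Hb. destruct (Rle_dec a b).
  - specialize (K a b ltac:(lra) r ltac:(lra)). rewrite Rabs_minus_sym, (Rabs_minus_sym a b).
    rewrite (Rabs_right (b - a)) by lra. apply Rabs_le. lra.
  - specialize (K b a ltac:(lra) ltac:(lra) ltac:(lra)).
    rewrite (Rabs_right (a - b)) by lra. apply Rabs_le. lra.
Qed.

Lemma qv_Bern Cv p d n : qv Cv p d n = Bern n (fun j => Cv j d) p.
Proof. reflexivity. Qed.

Lemma qvR_Bern Cv p d K : qvR Cv p d K =
  (INR (nfloor K) + 1 - K) * Bern (nfloor K) (fun j => Cv j d) p
  + (K - INR (nfloor K)) * Bern (S (nfloor K)) (fun j => Cv j d) p.
Proof. reflexivity. Qed.

Lemma qvR_bounds Cv p d K : 0 <= K -> 0 <= p <= 1 -> (forall j, 0 <= Cv j d <= 1) ->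
  0 <= qvR Cv p d K <= 1.
Proof.
  intros HK Hp HF. rewrite qvR_Bern. pose proof (nfloor_spec K HK).
  pose proof (Bern_bounds (nfloor K) (fun j => Cv j d) p 0 1 HF Hp).
  pose proof (Bern_bounds (S (nfloor K)) (fun j => Cv j d) p 0 1 HF Hp).
  nra.
Qed.

Lemma qvR_mono Cv p p' d K : 0 <= K -> (forall j, 0 <= Cv j d <= 1) -> (forall j, Cv (S j) d <= Cv j d) ->
  0 <= p -> p <= p' -> p' <= 1 ->
  0 <= qvR Cv p d K - qvR Cv p' d K <= (INR (nfloor K) + 1) * (p' - p).
Proof.
  intros HK HF HM H1 H2 H3. rewrite !qvR_Bern. pose proof (nfloor_spec K HK).
  set (n := nfloor K) in *.
  pose proof (Bern_mono n (fun j => Cv j d) p p' HF HM H1 H2 H3).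
  pose proof (Bern_mono (S n) (fun j => Cv j d) p p' HF HM H1 H2 H3).
  rewrite S_INR in *.
  set (a := Bern n (fun j => Cv j d) p) in *. set (b := Bern n (fun j => Cv j d) p') in *.
  set (c := Bern (S n) (fun j => Cv j d) p) in *. set (e := Bern (S n) (fun j => Cv j d) p') in *.
  assert (0 <= (INR n + 1 - K) * (a - b) <= (INR n + 1 - K) * (INR n * (p' - p)))
    by (split; [apply Rmult_le_pos|apply Rmult_le_compat_l]; lra).
  assert (0 <= (K - INR n) * (c - e) <= (K - INR n) * ((INR n + 1) * (p' - p)))
    by (split; [apply Rmult_le_pos|apply Rmult_le_compat_l]; lra).
  split; nra.
Qed.

Lemma qvR_close Cv p d d' K c : 0 <= K -> 0 <= p <= 1 ->
  (forall j, (j <= S (nfloor K))%nat -> Rabs (Cv j d - Cv j d') <= c) ->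
  Rabs (qvR Cv p d K - qvR Cv p d' K) <= c.
Proof.
  intros HK Hp H. rewrite !qvR_Bern. pose proof (nfloor_spec K HK).
  set (n := nfloor K) in *.
  pose proof (Bern_close n (fun j => Cv j d) (fun j => Cv j d') p c (fun j Hj => H j ltac:(lia)) Hp) as A1.
  pose proof (Bern_close (S n) (fun j => Cv j d) (fun j => Cv j d') p c H Hp) as A2.
  apply Rabs_le_between in A1. apply Rabs_le_between in A2. apply Rabs_le.
  set (a := Bern n (fun j => Cv j d) p) in *. set (b := Bern n (fun j => Cv j d') p) in *.
  set (a' := Bern (S n) (fun j => Cv j d) p) in *. set (b' := Bern (S n) (fun j => Cv j d') p) in *.
  assert (-((INR n + 1 - K) * c) <= (INR n + 1 - K) * (a - b) <= (INR n + 1 - K) * c)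
    by (split; nra).
  assert (-((K - INR n) * c) <= (K - INR n) * (a' - b') <= (K - INR n) * c)
    by (split; nra).
  nra.
Qed.

Lemma qvR_seg Cv p d i K : INR i <= K <= INR i + 1 ->
  qvR Cv p d K = (INR i + 1 - K) * Bern i (fun j => Cv j d) p + (K - INR i) * Bern (S i) (fun j => Cv j d) p.
Proof.
  intros H. destruct (Rlt_dec K (INR i + 1)).
  - rewrite qvR_Bern. rewrite (nfloor_eq i K) by lra. reflexivity.
  - assert (K = INR (S i)) by (rewrite S_INR; lra). subst K.
    rewrite qvR_Bern, nfloor_INR. rewrite S_INR. ring.
Qed.

Lemma qvR_Klip Cv p d N : 0 <= p <= 1 -> (forall j, 0 <= Cv j d <= 1) ->
  forall a b, 0 <= a <= INR N -> 0 <= b <= INR N ->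
  Rabs (qvR Cv p d a - qvR Cv p d b) <= 1 * Rabs (a - b).
Proof.
  intros Hp HF a b Ha Hb.
  apply (chain_abs INR (fun K => qvR Cv p d K) 1 N); try (simpl; lra).
  intros i Hi x y H1 H2 H3. rewrite S_INR in H3.
  rewrite !(qvR_seg Cv p d i) by lra.
  pose proof (Bern_bounds i (fun j => Cv j d) p 0 1 HF Hp).
  pose proof (Bern_bounds (S i) (fun j => Cv j d) p 0 1 HF Hp).
  replace ((INR i + 1 - y) * Bern i (fun j => Cv j d) p + (y - INR i) * Bern (S i) (fun j => Cv j d) p -
     ((INR i + 1 - x) * Bern i (fun j => Cv j d) p + (x - INR i) * Bern (S i) (fun j => Cv j d) p))
    with ((y - x) * (Bern (S i) (fun j => Cv j d) p - Bern i (fun j => Cv j d) p)) by ring.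
  rewrite Rabs_mult, (Rabs_right (y - x)) by lra.
  rewrite Rmult_comm. apply Rmult_le_compat_r; [lra|]. apply Rabs_le. lra.
Qed.

Lemma vcomb_simplex M lam x y : in_simplex M x -> in_simplex M y -> 0 <= lam <= 1 ->
  in_simplex M (vcomb lam x y).
Proof.
  intros [Hx Sx] [Hy Sy] Hl. split.
  - intros m Hm. specialize (Hx m Hm). specialize (Hy m Hm). unfold vcomb. nra.
  - unfold vcomb. rewrite sumR_lin, Sx, Sy. ring.
Qed.

Lemma Lmax_exists M (Cv : nat -> (nat -> R) -> R) :
  (forall j, exists Lc, forall d1 d2, in_simplex M d1 -> in_simplex M d2 ->
       Rabs (Cv j d1 - Cv j d2) <= Lc * distM M d1 d2) ->
  forall n, exists Lm, 0 <= Lm /\ forall j, (j <= n)%nat -> forall d1 d2, in_simplex M d1 -> in_simplex M d2 ->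
       Rabs (Cv j d1 - Cv j d2) <= Lm * distM M d1 d2.
Proof.
  intros H n. induction n.
  - destruct (H 0%nat) as [Lc HL]. exists (Rabs Lc). split; [apply Rabs_pos|].
    intros j Hj d1 d2 H1 H2. replace j with 0%nat by lia.
    eapply Rle_trans; [apply HL; auto|]. apply Rmult_le_compat_r; [apply distM_nonneg| apply Rle_abs].
  - destruct IHn as [Lm [HLm IH]]. destruct (H (S n)) as [Lc HL].
    exists (Rmax Lm (Rabs Lc)). split; [eapply Rle_trans; [exact HLm| apply Rmax_l]|].
    intros j Hj d1 d2 H1 H2. pose proof (distM_nonneg M d1 d2).
    destruct (Nat.eq_dec j (S n)).
    + subst. eapply Rle_trans; [apply HL; auto|]. apply Rmult_le_compat_r; auto.
      eapply Rle_trans; [apply Rle_abs| apply Rmax_r].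
    + eapply Rle_trans; [apply IH; auto; lia|]. apply Rmult_le_compat_r; auto. apply Rmax_l.
Qed.

Definition clamp (lo hi x : R) := Rmax lo (Rmin hi x).

Lemma clamp_in lo hi x : lo <= hi -> lo <= clamp lo hi x <= hi.
Proof. intros. unfold clamp, Rmax, Rmin. repeat destruct Rle_dec; lra. Qed.
Lemma clamp_id lo hi x : lo <= x <= hi -> clamp lo hi x = x.
Proof. intros. unfold clamp, Rmax, Rmin. repeat destruct Rle_dec; lra. Qed.
Lemma clamp_lip lo hi x y : lo <= hi -> Rabs (clamp lo hi x - clamp lo hi y) <= Rabs (x - y).
Proof. intros. unfold clamp, Rmax, Rmin. repeat destruct Rle_dec; split_Rabs; lra. Qed.

Lemma IVT_lip (g : R -> R) (lo hi A t : R) : lo < hi -> 0 <= A ->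
  (forall x y, lo <= x <= hi -> lo <= y <= hi -> Rabs (g x - g y) <= A * Rabs (x - y)) ->
  g hi <= t <= g lo -> exists p, lo <= p <= hi /\ g p = t.
Proof.
  intros Hlh HA Hg [T1 T2].
  destruct (Req_dec (g hi) t) as [E|E]; [exists hi; split; [lra|auto]|].
  destruct (Req_dec (g lo) t) as [E'|E']; [exists lo; split; [lra|auto]|].
  set (h := fun x => t - g (clamp lo hi x)).
  assert (Hc : continuity h).
  { intros x eps Heps. exists (eps / (A + 1)). split.
    - apply Rdiv_lt_0_compat; lra.
    - intros y [_ Hy]. simpl in *. unfold R_dist in *. unfold h. cbv beta.
      replace (t - g (clamp lo hi y) - (t - g (clamp lo hi x))) with (-(g (clamp lo hi y) - g (clamp lo hi x))) by ring.
      rewrite Rabs_Ropp.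
      pose proof (clamp_in lo hi x ltac:(lra)). pose proof (clamp_in lo hi y ltac:(lra)).
      eapply Rle_lt_trans; [apply Hg; auto|].
      eapply Rle_lt_trans; [apply Rmult_le_compat_l; [exact HA| apply clamp_lip; lra]|].
      apply Rle_lt_trans with (A * (eps / (A + 1))).
      + apply Rmult_le_compat_l; lra.
      + apply Rlt_le_trans with ((A + 1) * (eps / (A + 1))). 
        * apply Rmult_lt_compat_r; [apply Rdiv_lt_0_compat|]; lra.
        * right. field. lra. }
  destruct (IVT h lo hi Hc Hlh) as [z [Hz Hz0]].
  - unfold h. rewrite clamp_id by lra. lra.
  - unfold h. rewrite clamp_id by lra. lra.
  - exists z. split; auto. unfold h in Hz0. rewrite clamp_id in Hz0 by lra. lra.
Qed.

Lemma seg_exists (x : nat -> R) K : forall L, x 0%nat <= K < x L ->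
  exists i, (1 <= i <= L)%nat /\ x (i - 1)%nat <= K < x i.
Proof.
  induction L; intros [H1 H2]. - lra.
  - destruct (Rlt_dec K (x L)).
    + destruct (IHL (conj H1 r)) as [i [Hi HK]]. exists i. split; [lia|auto].
    + exists (S L). split; [lia|]. replace (S L - 1)%nat with L by lia. lra.
Qed.

Lemma pow_decr m k N : 0 <= m <= 1 -> (k <= N)%nat -> m ^ N <= m ^ k.
Proof.
  intros Hm Hk. replace N with (k + (N - k))%nat by lia. rewrite pow_add.
  pose proof (pow_le m k ltac:(lra)). 
  assert (m ^ (N - k) <= 1). { induction (N - k)%nat; simpl; [lra|]. pose proof (pow_le m n ltac:(lra)). nra. }
  pose proof (pow_le m (N - k) ltac:(lra)). nra.
Qed.

Lemma Kmono (Kp : nat -> nat) L : (forall i, (i < L)%nat -> (Kp i < Kp (S i))%nat) ->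
  forall i j, (i <= j <= L)%nat -> (Kp i <= Kp j)%nat /\ ((i < j)%nat -> (Kp i < Kp j)%nat).
Proof.
  intros H i j Hij. induction j.
  - replace i with 0%nat by lia. lia.
  - destruct (Nat.eq_dec i (S j)). + subst. lia.
    + specialize (IHj ltac:(lia)). specialize (H j ltac:(lia)). lia.
Qed.

Theorem theorem7
  (M : nat) (Cv : nat -> (nat -> R) -> R)
  (L : nat) (Kp : nat -> nat) (p0 : nat -> R) (d0 : nat -> (nat -> R))
  (eps_q eps_v p_lo p_hi : R) :
  (1 <= M)%nat ->
  (* regularity of the C_{vj} on the simplex *)
  (forall j d, in_simplex M d -> 0 <= Cv j d <= 1) ->
  (forall j, exists Lc, forall d1 d2, in_simplex M d1 -> in_simplex M d2 ->
       Rabs (Cv j d1 - Cv j d2) <= Lc * distM M d1 d2) ->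
  (forall j d, in_simplex M d -> Cv j d >= Cv (S j) d) ->
  (* pinpoints *)
  (1 <= L)%nat ->
  (forall i, (i < L)%nat -> (Kp i < Kp (S i))%nat) ->
  (forall i, (i <= L)%nat -> 0 < p0 i < 1) ->
  (forall i, (i <= L)%nat -> in_simplex M (d0 i)) ->
  let qs := fun i => qvR Cv (p0 i) (d0 i) (INR (Kp i)) in
  let dil := fun i lam => vcomb lam (d0 (i - 1)%nat) (d0 i) in
  let qil := fun i lam => (1 - lam) * qs (i - 1)%nat + lam * qs i in
  (* Pinpoints Condition *)
  0 < eps_q ->
  (forall i, (1 <= i <= L)%nat -> qs (i - 1)%nat - qs i >= eps_q) ->
  0 < eps_v ->
  (forall i lam, (1 <= i <= L)%nat -> 0 <= lam < 1 ->
       gtJ Cv eps_v (dil i lam) (Kil Kp i lam)) ->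
  0 < p_lo -> p_lo < p_hi -> p_hi < 1 ->
  (forall i, (1 <= i <= L)%nat -> p_lo <= p0 i <= p_hi) ->
  (forall i lam, (1 <= i <= L)%nat -> 0 <= lam < 1 ->
       qvR Cv p_hi (dil i lam) (Kil Kp i lam) <= qil i lam /\
       qil i lam <= qvR Cv p_lo (dil i lam) (Kil Kp i lam)) ->
  (* the Interpolation Approach: specification of the completed functions *)
  let spec := fun (pf : R -> R) (df : R -> (nat -> R)) =>
    (forall i lam, (1 <= i <= L)%nat -> 0 <= lam < 1 ->
       p_lo <= pf (Kil Kp i lam) <= p_hi /\
       qvR Cv (pf (Kil Kp i lam)) (dil i lam) (Kil Kp i lam) = qil i lam /\
       df (Kil Kp i lam) = dil i lam) /\
    pf (INR (Kp L)) = p0 L /\ df (INR (Kp L)) = d0 L in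
  let K0 := INR (Kp 0%nat) in
  let KL := INR (Kp L) in
  (exists pf df, spec pf df) /\
  (forall pf df, spec pf df ->
     let pv := fun K => vscale (pf K) (df K) in
     let qstar := fun K => qvR Cv (pf K) (df K) K in
     (* (a) *)
     (exists Kg, 0 < Kg /\ forall Ka Kb, K0 <= Ka <= KL -> K0 <= Kb <= KL ->
        distM M (pv Ka) (pv Kb) <= Kg * Rabs (Ka - Kb)) /\
     (* (b) *)
     (forall K, K0 <= K <= KL ->
        limit1_in qstar (fun y => K0 <= y <= KL) (qstar K) K) /\
     (forall Ka Kb, K0 <= Ka <= KL -> K0 <= Kb <= KL -> Ka < Kb ->
        qstar Kb < qstar Ka) /\
     (exists eps', 0 < eps' /\ forall Ka Kb, K0 <= Ka <= KL -> K0 <= Kb <= KL ->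
        Rabs (qstar Ka - qstar Kb) >= eps' * Rabs (Ka - Kb)) /\
     (* (c) *)
     (forall K, K0 <= K < KL -> gtJ Cv eps_v (df K) K) /\
     (* (d) *)
     (forall K, K0 <= K <= KL -> p_lo <= pf K <= p_hi)).
Proof.
  intros HM HC01 HLip HCm HL1 HKp Hp0 Hd0 qs dil qil Heq Hqs Hev HJ Hplo Hlohi Hphi Hp0b H4 spec K0 KL.
  set (x := fun i => INR (Kp i)).
  assert (Hmono := Kmono Kp L HKp).
  assert (Hgap : forall i, (1 <= i <= L)%nat -> x (i - 1)%nat + 1 <= x i).
  { intros i Hi. unfold x. rewrite <- S_INR. apply le_INR. destruct (Hmono (i-1)%nat i ltac:(lia)) as [_ H]. specialize (H ltac:(lia)). lia. }
  assert (Hxle : forall i j, (i <= j <= L)%nat -> x i <= x j).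
  { intros i j H. unfold x. apply le_INR. apply Hmono. auto. }
  assert (HK0 : 0 <= K0) by apply pos_INR.
  assert (HK0L : K0 + 1 <= KL).
  { unfold K0, KL. fold (x 0%nat) (x L). pose proof (Hgap 1%nat ltac:(lia)). pose proof (Hxle 1%nat L ltac:(lia)). simpl in *. lra. }
  assert (HF : forall d, in_simplex M d -> forall j, 0 <= Cv j d <= 1) by (intros; apply HC01; auto).
  assert (HMo : forall d, in_simplex M d -> forall j, Cv (S j) d <= Cv j d) by (intros d Hd j; specialize (HCm j d Hd); lra).
  assert (Hdil : forall i lam, (1 <= i <= L)%nat -> 0 <= lam <= 1 -> in_simplex M (dil i lam)).
  { intros i lam Hi Hl. apply vcomb_simplex; auto; apply Hd0; lia. }
  assert (Hqs01 : forall i, (i <= L)%nat -> 0 <= qs i <= 1).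
  { intros i Hi. apply qvR_bounds; [apply pos_INR| specialize (Hp0 i Hi); lra| apply HF, Hd0; auto]. }
  assert (HKil : forall i lam, Kil Kp i lam = (1 - lam) * x (i - 1)%nat + lam * x i) by reflexivity.
  assert (HKr : forall i lam, (1 <= i <= L)%nat -> 0 <= lam < 1 -> x (i - 1)%nat <= Kil Kp i lam < x i).
  { intros i lam Hi Hl. rewrite HKil. pose proof (Hgap i Hi). nra. }
  assert (HKrep : forall i K, (1 <= i <= L)%nat -> x (i - 1)%nat <= K <= x i ->
     Kil Kp i ((K - x (i - 1)%nat) / (x i - x (i - 1)%nat)) = K /\
     0 <= (K - x (i - 1)%nat) / (x i - x (i - 1)%nat) <= 1 /\
     (K < x i -> (K - x (i - 1)%nat) / (x i - x (i - 1)%nat) < 1)).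
  { intros i K Hi HK. pose proof (Hgap i Hi). rewrite HKil. split; [field; lra|]. split.
    - split; [unfold Rdiv; apply Rmult_le_pos; [lra| apply Rlt_le, Rinv_0_lt_compat]| apply (Rmult_le_reg_r (x i - x (i - 1)%nat)); [lra|]; unfold Rdiv; rewrite Rmult_assoc, Rinv_l]; lra.
    - intros Hl. apply (Rmult_lt_reg_r (x i - x (i - 1)%nat)); [lra|]. unfold Rdiv; rewrite Rmult_assoc, Rinv_l; lra. }
  assert (Huniq : forall i lam i' lam', (1 <= i <= L)%nat -> 0 <= lam < 1 ->
     (1 <= i' <= L)%nat -> 0 <= lam' < 1 -> Kil Kp i lam = Kil Kp i' lam' -> i = i' /\ lam = lam').
  { intros i lam i' lam' Hi Hl Hi' Hl' E.
    pose proof (HKr i lam Hi Hl). pose proof (HKr i' lam' Hi' Hl').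
    destruct (lt_eq_lt_dec i i') as [[Hlt|Heq']|Hlt].
    - pose proof (Hxle i (i' - 1)%nat ltac:(lia)). lra.
    - subst i'. split; auto. rewrite !HKil in E. pose proof (Hgap i Hi).
      apply Rmult_eq_reg_r with (x i - x (i - 1)%nat); [|lra]. nra.
    - pose proof (Hxle i' (i - 1)%nat ltac:(lia)). lra. }
  assert (Hivt : forall i lam, (1 <= i <= L)%nat -> 0 <= lam < 1 ->
     exists p, p_lo <= p <= p_hi /\ qvR Cv p (dil i lam) (Kil Kp i lam) = qil i lam).
  { intros i lam Hi Hl.
    assert (HK : 0 <= Kil Kp i lam). { pose proof (HKr i lam Hi Hl). pose proof (pos_INR (Kp (i - 1)%nat)). unfold x in *. lra. }
    assert (Hs := Hdil i lam Hi ltac:(lra)).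
    apply (IVT_lip (fun p => qvR Cv p (dil i lam) (Kil Kp i lam)) p_lo p_hi (INR (nfloor (Kil Kp i lam)) + 1)); [lra| | |apply H4; auto].
    - pose proof (pos_INR (nfloor (Kil Kp i lam))). lra.
    - intros a b Ha Hb. destruct (Rle_dec a b).
      + pose proof (qvR_mono Cv a b (dil i lam) (Kil Kp i lam) HK (HF _ Hs) (HMo _ Hs) ltac:(lra) r ltac:(lra)).
        rewrite Rabs_right by lra. rewrite Rabs_left1 by lra. lra.
      + pose proof (qvR_mono Cv b a (dil i lam) (Kil Kp i lam) HK (HF _ Hs) (HMo _ Hs) ltac:(lra) ltac:(lra) ltac:(lra)).
        rewrite Rabs_left1 by lra. rewrite Rabs_right by lra. lra. }
  assert (Hpick : forall K, exists pd : R * (nat -> R),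
     (forall i lam, (1 <= i <= L)%nat -> 0 <= lam < 1 -> K = Kil Kp i lam ->
        p_lo <= fst pd <= p_hi /\ qvR Cv (fst pd) (dil i lam) (Kil Kp i lam) = qil i lam /\ snd pd = dil i lam) /\
     (K = KL -> fst pd = p0 L /\ snd pd = d0 L)).
  { intros K. destruct (classic (exists i lam, (1 <= i <= L)%nat /\ 0 <= lam < 1 /\ K = Kil Kp i lam))
      as [[i [lam [Hi [Hl HK]]]] | Hn].
    - destruct (Hivt i lam Hi Hl) as [p [Hp Hq]]. exists (p, dil i lam). split.
      + intros i' lam' Hi' Hl' HK'. rewrite HK in HK'.
        destruct (Huniq i lam i' lam' Hi Hl Hi' Hl' HK') as [<- <-]. simpl. auto.
      + intros HKL. exfalso. pose proof (HKr i lam Hi Hl). pose proof (Hxle i L ltac:(lia)).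
        unfold KL in HKL. fold (x L) in HKL. lra.
    - exists (p0 L, d0 L). split.
      + intros i lam Hi Hl HK. exfalso. apply Hn. exists i, lam. auto.
      + simpl. auto. }
  split.
  { exists (fun K => fst (proj1_sig (constructive_indefinite_description _ (Hpick K)))).
    exists (fun K => snd (proj1_sig (constructive_indefinite_description _ (Hpick K)))).
    unfold spec. cbv beta. split; [|split].
    - intros i lam Hi Hl.
      destruct (proj2_sig (constructive_indefinite_description _ (Hpick (Kil Kp i lam)))) as [H1 _].
      apply H1; auto.
    - destruct (proj2_sig (constructive_indefinite_description _ (Hpick (INR (Kp L))))) as [_ H2].
      apply H2; reflexivity.
    - destruct (proj2_sig (constructive_indefinite_description _ (Hpick (INR (Kp L))))) as [_ H2].
      apply H2; reflexivity. }
  intros pf df Hspec pv qstar.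
  unfold spec in Hspec. cbv beta in Hspec. destruct Hspec as [Hs [HpL HdL]].
  assert (HSEG : forall i K, (1 <= i <= L)%nat -> x (i - 1)%nat <= K <= x i ->
     p_lo <= pf K <= p_hi /\
     (forall m, df K m = (1 - (K - x (i - 1)%nat) / (x i - x (i - 1)%nat)) * d0 (i - 1)%nat m
                        + (K - x (i - 1)%nat) / (x i - x (i - 1)%nat) * d0 i m) /\
     in_simplex M (df K) /\
     qstar K = (1 - (K - x (i - 1)%nat) / (x i - x (i - 1)%nat)) * qs (i - 1)%nat
               + (K - x (i - 1)%nat) / (x i - x (i - 1)%nat) * qs i).
  { intros i K Hi HK. destruct (HKrep i K Hi HK) as [E [Hl Hl1]].
    set (lam := (K - x (i - 1)%nat) / (x i - x (i - 1)%nat)) in *.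
    destruct (Rlt_dec K (x i)) as [Hlt|Hge].
    - specialize (Hl1 Hlt). destruct (Hs i lam Hi ltac:(lra)) as [B1 [B2 B3]].
      rewrite E in B1, B2, B3. unfold qstar. rewrite B3 in *. rewrite B2.
      refine (conj B1 (conj _ (conj _ _))); [intro m; reflexivity|apply Hdil; auto; lra| reflexivity].
    - assert (HKi : K = x i) by lra.
      assert (Hl' : lam = 1). { unfold lam. rewrite HKi. field. pose proof (Hgap i Hi). lra. }
      rewrite Hl'. destruct (Nat.eq_dec i L) as [HiL|HiL].
      + subst i. assert (HKK : K = INR (Kp L)) by (rewrite HKi; reflexivity).
        unfold qstar. rewrite HKK, HpL, HdL. split; [apply Hp0b; lia|]. split; [intro m; ring|].
        split; [apply Hd0; lia|]. unfold qs. ring.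
      + assert (E2 : Kil Kp (S i) 0 = K).
        { rewrite HKil. replace (S i - 1)%nat with i by lia. rewrite HKi. ring. }
        destruct (Hs (S i) 0 ltac:(lia) ltac:(lra)) as [B1 [B2 B3]].
        rewrite E2 in B1, B2, B3. unfold qstar. rewrite B3 in *. rewrite B2.
        refine (conj B1 (conj _ (conj _ _))).
        * intro m. unfold dil, vcomb. replace (S i - 1)%nat with i by lia. ring.
        * apply Hdil; [lia|lra].
        * unfold qil. replace (S i - 1)%nat with i by lia. ring. }
  assert (Hx0 : x 0%nat = K0) by reflexivity.
  assert (HxL : x L = KL) by reflexivity.
  assert (Hcover : forall K, K0 <= K <= KL -> exists i, (1 <= i <= L)%nat /\ x (i - 1)%nat <= K <= x i).
  { intros K HK. destruct (Rlt_dec K KL).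
    - destruct (seg_exists x K L ltac:(lra)) as [i [Hi HKi]]. exists i. split; auto; lra.
    - exists L. split; [lia|]. pose proof (Hxle (L - 1)%nat L ltac:(lia)). lra. }
  assert (Hd : forall K, K0 <= K <= KL -> p_lo <= pf K <= p_hi).
  { intros K HK. destruct (Hcover K HK) as [i [Hi HKi]]. apply (HSEG i K Hi HKi). }
  assert (Hsimp : forall K, K0 <= K <= KL -> in_simplex M (df K)).
  { intros K HK. destruct (Hcover K HK) as [i [Hi HKi]]. apply (HSEG i K Hi HKi). }
  assert (Hc : forall K, K0 <= K < KL -> gtJ Cv eps_v (df K) K).
  { intros K HK. destruct (seg_exists x K L ltac:(lra)) as [i [Hi HKi]].
    destruct (HKrep i K Hi ltac:(lra)) as [E [Hl Hl1]].
    set (lam := (K - x (i - 1)%nat) / (x i - x (i - 1)%nat)) in *.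
    specialize (Hl1 ltac:(lra)). destruct (Hs i lam Hi ltac:(lra)) as [_ [_ B3]].
    rewrite E in B3. rewrite B3. rewrite <- E. apply HJ; auto; lra. }
  assert (Hqch : forall a b, K0 <= a -> a <= b -> b <= KL ->
     -1 * (b - a) <= qstar b - qstar a <= (- (eps_q / (KL - K0))) * (b - a)).
  { intros a b Ha Hab Hb. rewrite <- Hx0 in Ha. rewrite <- HxL in Hb.
    apply (chain x qstar (-1) (- (eps_q / (KL - K0))) L); auto.
    intros i Hi a' b' H1 H2 H3.
    destruct (HSEG (S i) a' ltac:(lia) ltac:(replace (S i - 1)%nat with i by lia; lra)) as [_ [_ [_ Qa]]].
    destruct (HSEG (S i) b' ltac:(lia) ltac:(replace (S i - 1)%nat with i by lia; lra)) as [_ [_ [_ Qb]]].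
    replace (S i - 1)%nat with i in Qa, Qb by lia.
    pose proof (Hgap (S i) ltac:(lia)) as Hg. replace (S i - 1)%nat with i in Hg by lia.
    assert (E : qstar b' - qstar a' = (b' - a') / (x (S i) - x i) * (qs (S i) - qs i)).
    { rewrite Qa, Qb. field. lra. }
    rewrite E.
    pose proof (Hqs (S i) ltac:(lia)) as Hq. replace (S i - 1)%nat with i in Hq by lia.
    pose proof (Hqs01 i ltac:(lia)). pose proof (Hqs01 (S i) ltac:(lia)).
    assert (Hgl : x (S i) - x i <= KL - K0).
    { pose proof (Hxle 0%nat i ltac:(lia)). pose proof (Hxle (S i) L ltac:(lia)). lra. }
    set (u := (b' - a') / (x (S i) - x i)).
    assert (Hu0 : 0 <= u). { unfold u, Rdiv. apply Rmult_le_pos; [lra|]. apply Rlt_le, Rinv_0_lt_compat. lra. }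
    assert (Hu1 : u <= b' - a').
    { unfold u. apply (Rmult_le_reg_r (x (S i) - x i)); [lra|]. unfold Rdiv. rewrite Rmult_assoc, Rinv_l by lra. nra. }
    assert (Hu2 : (b' - a') / (KL - K0) <= u).
    { unfold u. unfold Rdiv. apply Rmult_le_compat_l; [lra|]. apply Rinv_le_contravar; lra. }
    assert (Hu3 : eps_q / (KL - K0) * (b' - a') = eps_q * ((b' - a') / (KL - K0))) by (field; lra).
    split; nra. }
  assert (Hdch : forall m, (m < M)%nat -> forall a b, K0 <= a <= KL -> K0 <= b <= KL ->
     Rabs (df a m - df b m) <= 1 * Rabs (a - b)).
  { intros m Hm a b Ha Hb. rewrite <- Hx0, <- HxL in Ha, Hb.
    apply (chain_abs x (fun K => df K m) 1 L); auto.
    intros i Hi a' b' H1 H2 H3.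
    destruct (HSEG (S i) a' ltac:(lia) ltac:(replace (S i - 1)%nat with i by lia; lra)) as [_ [Da _]].
    destruct (HSEG (S i) b' ltac:(lia) ltac:(replace (S i - 1)%nat with i by lia; lra)) as [_ [Db _]].
    specialize (Da m). specialize (Db m).
    replace (S i - 1)%nat with i in Da, Db by lia.
    pose proof (Hgap (S i) ltac:(lia)) as Hg. replace (S i - 1)%nat with i in Hg by lia.
    assert (E : df b' m - df a' m = (b' - a') / (x (S i) - x i) * (d0 (S i) m - d0 i m)).
    { rewrite Da, Db. field. lra. }
    rewrite E. destruct (Hd0 i ltac:(lia)) as [Hi1 _]. destruct (Hd0 (S i) ltac:(lia)) as [Hi2 _].
    specialize (Hi1 m Hm). specialize (Hi2 m Hm).
    set (u := (b' - a') / (x (S i) - x i)).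
    assert (Hu0 : 0 <= u). { unfold u, Rdiv. apply Rmult_le_pos; [lra|]. apply Rlt_le, Rinv_0_lt_compat. lra. }
    assert (Hu1 : u <= b' - a').
    { unfold u. apply (Rmult_le_reg_r (x (S i) - x i)); [lra|]. unfold Rdiv. rewrite Rmult_assoc, Rinv_l by lra. nra. }
    rewrite Rabs_mult, (Rabs_right u) by lra.
    assert (Rabs (d0 (S i) m - d0 i m) <= 1) by (apply Rabs_le; lra).
    pose proof (Rabs_pos (d0 (S i) m - d0 i m)). nra. }
  assert (Hddist : forall a b, K0 <= a <= KL -> K0 <= b <= KL ->
     distM M (df a) (df b) <= sqrt (INR M) * Rabs (a - b)).
  { intros a b Ha Hb. apply distM_bound; [apply Rabs_pos|]. intros m Hm.
    rewrite <- (Rmult_1_l (Rabs (a - b))). apply Hdch; auto. }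
  assert (Heq' : 0 < eps_q / (KL - K0)) by (apply Rdiv_lt_0_compat; lra).
  assert (Hql : forall a b, K0 <= a <= KL -> K0 <= b <= KL -> Rabs (qstar a - qstar b) <= Rabs (a - b)).
  { intros a b Ha Hb. destruct (Rle_dec a b).
    - pose proof (Hqch a b ltac:(lra) r ltac:(lra)). rewrite (Rabs_left1 (a - b)) by lra.
      apply Rabs_le. nra.
    - pose proof (Hqch b a ltac:(lra) ltac:(lra) ltac:(lra)). rewrite (Rabs_right (a - b)) by lra.
      apply Rabs_le. nra. }
  split; [|split; [|split; [|split; [|split]]]].
  - destruct (Lmax_exists M Cv HLip (S (Kp L))) as [Lm [HLm HLmb]].
    set (N := Kp L) in *.
    assert (HKLN : KL = INR N) by reflexivity.
    set (m0 := Rmin p_lo (1 - p_hi)).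
    assert (Hm0 : 0 < m0 /\ m0 <= p_lo /\ m0 <= 1 - p_hi).
    { unfold m0, Rmin. destruct Rle_dec; lra. }
    set (c0 := m0 ^ N).
    assert (Hc0 : 0 < c0) by (apply pow_lt; lra).
    assert (Hc0k : forall k, (k <= N)%nat -> c0 <= m0 ^ k) by (intros; apply pow_decr; auto; lra).
    set (sM := sqrt (INR M)).
    assert (HsM : 0 < sM). { apply sqrt_lt_R0. apply lt_0_INR. lia. }
    set (del := Rmin (1/2) (eps_v / (4 * (Lm * sM) + 1))).
    assert (Hdel : 0 < del /\ del <= 1/2 /\ 4 * (Lm * sM) * del <= eps_v).
    { assert (0 <= Lm * sM) by (apply Rmult_le_pos; lra).
      assert (0 < eps_v / (4 * (Lm * sM) + 1)) by (apply Rdiv_lt_0_compat; lra).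
      assert (E : eps_v / (4 * (Lm * sM) + 1) * (4 * (Lm * sM) + 1) = eps_v) by (field; lra).
      unfold del, Rmin. destruct Rle_dec; nra. }
    set (mu := c0 * (eps_v / 2) * del).
    assert (Hmu : 0 < mu). { unfold mu. apply Rmult_lt_0_compat; [apply Rmult_lt_0_compat|]; lra. }
    assert (Q5 : forall K, K0 <= K < KL -> forall p p', p_lo <= p -> p <= p' -> p' <= p_hi ->
        mu * (p' - p) <= qvR Cv p (df K) K - qvR Cv p' (df K) K).
    { intros K HK p p' H1 H2 H3.
      assert (Hsd := Hsimp K ltac:(lra)). assert (HFd := HF _ Hsd). assert (HMd := HMo _ Hsd).
      pose proof (nfloor_spec K ltac:(lra)) as Hn.
      rewrite !qvR_Bern. set (n := nfloor K) in *.
      assert (HnN : (n < N)%nat). { apply INR_lt. lra. }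
      set (f := fun j => Cv j (df K)) in *.
      assert (Hstr : forall k g J', (k <= N)%nat -> (J' <= k)%nat -> g <= f J' - f (S J') -> 0 <= g ->
         (p' - p) * (c0 * g) <= Bern (S k) f p - Bern (S k) f p').
      { intros k g J' Hk HJ' Hg1 Hg2.
        pose proof (Bern_strict k f p p' m0 J' HFd HMd ltac:(lra) H2 ltac:(lra) ltac:(lra) ltac:(lra) ltac:(lra) HJ').
        eapply Rle_trans; [|eassumption]. apply Rmult_le_compat_l; [lra|].
        apply Rmult_le_compat; try lra. specialize (Hc0k k Hk). lra. }
      pose proof (Bern_mono n f p p' HFd HMd ltac:(lra) H2 ltac:(lra)) as X0.
      pose proof (Bern_mono (S n) f p p' HFd HMd ltac:(lra) H2 ltac:(lra)) as X1.
      destruct (Hc K HK) as [J [[HJg HJmin] HJK]].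
      assert (HJn : (J <= n)%nat). { assert (INR J < INR (S n)) by (rewrite S_INR; lra). apply INR_lt in H. lia. }
      assert (Y1 : (p' - p) * (c0 * eps_v) <= Bern (S n) f p - Bern (S n) f p').
      { apply (Hstr n eps_v J); [lia|auto|unfold f; lra|lra]. }
      assert (Hmuc : mu * (p' - p) <= (p' - p) * (c0 * eps_v) * del).
      { assert (0 <= (p' - p) * (c0 * eps_v) * del).
        { apply Rmult_le_pos; [apply Rmult_le_pos; [lra|apply Rmult_le_pos]|]; lra. }
        assert (E : mu * (p' - p) = (p' - p) * (c0 * eps_v) * del / 2) by (unfold mu; field).
        lra. }
      set (w0 := INR n + 1 - K). set (w1 := K - INR n).
      assert (Hw : 0 <= w0 /\ 0 <= w1 /\ w0 + w1 = 1) by (unfold w0, w1; lra).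
      set (X := Bern n f p - Bern n f p') in *. set (Y := Bern (S n) f p - Bern (S n) f p') in *.
      replace (w0 * Bern n f p + w1 * Bern (S n) f p - (w0 * Bern n f p' + w1 * Bern (S n) f p'))
        with (w0 * X + w1 * Y) by (unfold X, Y; ring).
      assert (HA : 0 <= (p' - p) * (c0 * eps_v)) by (apply Rmult_le_pos; [lra|]; apply Rmult_le_pos; lra).
      destruct (Nat.eq_dec J n) as [HJe|HJne].
      + destruct (Rle_dec del w1) as [Hw1|Hw1].
        * assert (w1 * Y >= del * ((p' - p) * (c0 * eps_v))) by nra.
          assert (0 <= w0 * X) by nra. nra.
        * unfold w1 in Hw1.
          assert (HKn : K0 <= INR n < KL).
          { split; [|lra]. unfold K0. apply le_INR. assert (INR (Kp 0%nat) < INR (S n)) by (rewrite S_INR; unfold K0 in HK; lra).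
            apply INR_lt in H. lia. }
          destruct (Hc (INR n) HKn) as [J' [[HJg' _] HJK']].
          apply INR_lt in HJK'.
          assert (Hdd := Hddist K (INR n) ltac:(lra) ltac:(lra)).
          rewrite (Rabs_right (K - INR n)) in Hdd by lra.
          assert (Hsn := Hsimp (INR n) ltac:(lra)).
          pose proof (HLmb J' ltac:(lia) (df K) (df (INR n)) Hsd Hsn) as L1.
          pose proof (HLmb (S J') ltac:(lia) (df K) (df (INR n)) Hsd Hsn) as L2.
          apply Rabs_le_between in L1. apply Rabs_le_between in L2.
          assert (HLd : Lm * distM M (df K) (df (INR n)) <= Lm * (sM * del)).
          { apply Rmult_le_compat_l; auto. eapply Rle_trans; [exact Hdd|]. apply Rmult_le_compat_l; lra. }
          assert (Hgap' : eps_v / 2 <= f J' - f (S J')). { unfold f. nra. }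
          assert (Y0 : (p' - p) * (c0 * (eps_v / 2)) <= X).
          { unfold X. replace n with (S (n - 1)) by lia. apply (Hstr (n - 1)%nat (eps_v / 2) J'); [lia|lia|auto|lra]. }
          assert (w0 >= 1/2) by (unfold w0, w1 in *; lra).
          assert (0 <= w1 * Y) by nra.
          assert (w0 * X >= 1/2 * ((p' - p) * (c0 * (eps_v / 2)))) by nra.
          nra.
      + assert (Y0 : (p' - p) * (c0 * eps_v) <= X).
        { unfold X. replace n with (S (n - 1)) by lia. apply (Hstr (n - 1)%nat eps_v J); [lia|lia|unfold f; lra|lra]. }
        assert (w0 * X + w1 * Y >= (w0 + w1) * ((p' - p) * (c0 * eps_v))) by nra.
        nra. }
    set (Lp := (2 + Lm * sM) / mu).
    assert (HLp : 0 <= Lp). { unfold Lp. apply Rlt_le, Rdiv_lt_0_compat; [|lra]. assert (0 <= Lm * sM) by (apply Rmult_le_pos; lra). lra. }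
    assert (Hpl1 : forall a b, K0 <= a < KL -> K0 <= b <= KL -> Rabs (pf a - pf b) <= Lp * Rabs (a - b)).
    { intros a b Ha Hb. pose proof (Hd a ltac:(lra)) as HPa. pose proof (Hd b Hb) as HPb.
      set (P := pf a) in *. set (Q := pf b) in *.
      assert (HD : mu * Rabs (P - Q) <= Rabs (qvR Cv P (df a) a - qvR Cv Q (df a) a)).
      { destruct (Rle_dec P Q).
        - pose proof (Q5 a Ha P Q ltac:(lra) r ltac:(lra)).
          rewrite (Rabs_left1 (P - Q)) by lra. rewrite Rabs_right by nra. lra.
        - pose proof (Q5 a Ha Q P ltac:(lra) ltac:(lra) ltac:(lra)).
          rewrite (Rabs_right (P - Q)) by lra. rewrite Rabs_left1 by nra. lra. }
      assert (HB := Hql a b ltac:(lra) Hb).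
      assert (Hsb := Hsimp b Hb). assert (Hsa := Hsimp a ltac:(lra)).
      assert (HC := qvR_Klip Cv Q (df b) N ltac:(lra) (HF _ Hsb) b a ltac:(lra) ltac:(lra)).
      assert (Hfl : (nfloor a <= N)%nat).
      { pose proof (nfloor_spec a ltac:(lra)). apply INR_le. lra. }
      assert (HDd : Rabs (qvR Cv Q (df b) a - qvR Cv Q (df a) a) <= Lm * (sM * Rabs (a - b))).
      { eapply Rle_trans.
        - apply (qvR_close Cv Q (df b) (df a) a (Lm * distM M (df b) (df a))); [lra|lra|].
          intros j Hj. apply HLmb; auto. lia.
        - apply Rmult_le_compat_l; auto. rewrite Rabs_minus_sym. apply Hddist; lra. }
      assert (HT : Rabs (qvR Cv P (df a) a - qvR Cv Q (df a) a) <= (2 + Lm * sM) * Rabs (a - b)).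
      { replace (qvR Cv P (df a) a - qvR Cv Q (df a) a) with
          ((qstar a - qstar b) + (qvR Cv Q (df b) b - qvR Cv Q (df b) a) + (qvR Cv Q (df b) a - qvR Cv Q (df a) a))
          by (unfold qstar; cbv beta; fold P Q; ring).
        eapply Rle_trans; [apply Rabs_triang|]. eapply Rle_trans; [apply Rplus_le_compat_r, Rabs_triang|].
        rewrite (Rabs_minus_sym b a) in HC. lra. }
      apply (Rmult_le_reg_l mu); auto.
      replace (mu * (Lp * Rabs (a - b))) with ((2 + Lm * sM) * Rabs (a - b)) by (unfold Lp; field; lra).
      lra. }
    assert (Hpl : forall a b, K0 <= a <= KL -> K0 <= b <= KL -> Rabs (pf a - pf b) <= Lp * Rabs (a - b)).
    { intros a b Ha Hb. destruct (Rlt_dec a KL); [apply Hpl1; lra|].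
      destruct (Rlt_dec b KL).
      - rewrite Rabs_minus_sym, (Rabs_minus_sym a b). apply Hpl1; lra.
      - assert (a = b) by lra. subst. rewrite !Rminus_diag, Rabs_R0. lra. }
    exists (sM * (Lp + 1)). split; [apply Rmult_lt_0_compat; lra|].
    intros Ka Kb Ha Hb. unfold pv.
    eapply Rle_trans; [apply (distM_bound M _ _ ((Lp + 1) * Rabs (Ka - Kb)))|].
    + apply Rmult_le_pos; [lra| apply Rabs_pos].
    + intros m Hm. unfold vscale.
      replace (pf Ka * df Ka m - pf Kb * df Kb m) with ((pf Ka - pf Kb) * df Ka m + pf Kb * (df Ka m - df Kb m)) by ring.
      eapply Rle_trans; [apply Rabs_triang|]. rewrite !Rabs_mult.
      destruct (Hsimp Ka Ha) as [HA _]. specialize (HA m Hm).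
      pose proof (Hd Kb Hb).
      assert (Rabs (df Ka m) <= 1) by (apply Rabs_le; lra).
      assert (Rabs (pf Kb) <= 1) by (apply Rabs_le; lra).
      pose proof (Hpl Ka Kb Ha Hb). pose proof (Hdch m Hm Ka Kb Ha Hb).
      pose proof (Rabs_pos (pf Ka - pf Kb)). pose proof (Rabs_pos (df Ka m - df Kb m)).
      pose proof (Rabs_pos (df Ka m)). pose proof (Rabs_pos (pf Kb)). pose proof (Rabs_pos (Ka - Kb)).
      nra.
    + right. unfold sM. ring.
  - intros K HK eps Heps. exists eps. split; auto.
    intros y [Hy Hdy]. simpl in *. unfold R_dist in *.
    eapply Rle_lt_trans; [apply Hql; auto; lra| auto].
  - intros Ka Kb Ha Hb Hab. pose proof (Hqch Ka Kb ltac:(lra) ltac:(lra) ltac:(lra)). nra.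
  - exists (eps_q / (KL - K0)). split; auto. intros Ka Kb Ha Hb. destruct (Rle_dec Ka Kb).
    + pose proof (Hqch Ka Kb ltac:(lra) r ltac:(lra)). rewrite (Rabs_left1 (Ka - Kb)) by lra.
      rewrite Rabs_right by nra. nra.
    + pose proof (Hqch Kb Ka ltac:(lra) ltac:(lra) ltac:(lra)). rewrite (Rabs_right (Ka - Kb)) by lra.
      rewrite Rabs_left1 by nra. nra.
  - exact Hc.
  - exact Hd.
Qed.
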